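(* Let $p$ be a prime and $m,n\in\mathbb{Z}$. Then ($n=m^2$, $p\nmid m$ and $p\nmid n$) if and only if $p\nmid m$, $p\nmid n$, and there exists $a\in\{\pm p^h: h\geq 1\}$ such that $m\mid a^2-1$, $n\mid a^2-1$ and $(a^8-m)\mid(a^{16}-n)$. Consequently, the collection of sets $\{(n,n^2): n\in\mathbb{Z},\ p\nmid n\}$, $p$ prime, is uniformly positive existentially definable in the class $\mathcal{D}=\{\mathfrak{D}_p: p\text{ prime}\}$ over the language $\{0,1,+,\mid,R,T\}$.
   Context: Divisibility $\mid$ is ordinary divisibility in $\mathbb{Z}$. For a prime $p$, $x\mid_p y$ means $y=\pm xp^s$ for some $s\in\mathbb{Z}$. $\mathfrak{D}_p=(\mathbb{Z};0,1,+,\mid,\mid_p,\mathbb{Z}\smallsetminus\{-1,0,1\})$, with $R$ interpreted as $\mid_p$ and $T$ as $\mathbb{Z}\smallsetminus\{-1,0,1\}$. Uniformly positive existentially definable means a single positive existential formula of the language defines the corresponding set in every $\mathfrak{D}_p$. *)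

(* Defs.v *)
From Stdlib Require Import ZArith Znumtheory.
Open Scope Z_scope.

(* x |_p y  :<->  y = +- x p^s for some s in Z.  For integers this means:
   for some s : nat, y = +- x p^s (s >= 0) or x = +- y p^s (s <= 0). *)
Definition pdiv (p x y : Z) : Prop :=
  exists s : nat,
    y = x * p ^ Z.of_nat s \/ y = - (x * p ^ Z.of_nat s) \/
    x = y * p ^ Z.of_nat s \/ x = - (y * p ^ Z.of_nat s).

Definition Tset (x : Z) : Prop := x <> -1 /\ x <> 0 /\ x <> 1.

Inductive term : Type :=
  | tVar : nat -> term
  | tZero : term
  | tOne : term
  | tPlus : term -> term -> term.

Inductive pef : Type :=
  | fEq : term -> term -> pef
  | fDiv : term -> term -> pef
  | fR : term -> term -> pef
  | fT : term -> pef
  | fAnd : pef -> pef -> pef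
  | fOr : pef -> pef -> pef
  | fEx : nat -> pef -> pef.

Fixpoint teval (env : nat -> Z) (t : term) : Z :=
  match t with
  | tVar i => env i
  | tZero => 0
  | tOne => 1
  | tPlus a b => teval env a + teval env b
  end.

Definition upd (env : nat -> Z) (i : nat) (v : Z) : nat -> Z :=
  fun j => if Nat.eqb j i then v else env j.

Fixpoint sat (p : Z) (env : nat -> Z) (f : pef) : Prop :=
  match f with
  | fEq a b => teval env a = teval env b
  | fDiv a b => Z.divide (teval env a) (teval env b)
  | fR a b => pdiv p (teval env a) (teval env b)
  | fT a => Tset (teval env a)
  | fAnd f g => sat p env f /\ sat p env g
  | fOr f g => sat p env f \/ sat p env g
  | fEx i f => exists v : Z, sat p (upd env i v) f
  end.

Definition unif_pe_definable2 (S : Z -> Z -> Z -> Prop) : Prop :=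
  exists phi : pef, forall p : Z, prime p ->
    forall env : nat -> Z, sat p env phi <-> S p (env 0%nat) (env 1%nat).

(* Main.v *)
Require Import Defs.
From Stdlib Require Import ZArith Znumtheory.
From Stdlib Require Import Zpow_facts Lia.
From mathcomp Require ssreflect ssrbool eqtype ssrnat div prime cyclic.
Open Scope Z_scope.

Lemma expn_Z (a t : nat) : Z.of_nat (ssrnat.expn a t) = Z.of_nat a ^ Z.of_nat t.
Proof.
  induction t as [|t IH].
  - reflexivity.
  - rewrite ssrnat.expnS. change (ssrnat.muln a (ssrnat.expn a t)) with (Nat.mul a (ssrnat.expn a t)).
    rewrite Nat2Z.inj_mul, IH, Nat2Z.inj_succ, Z.pow_succ_r by lia. ring.
Qed.

Lemma dvdn_Z (d m : nat) : div.dvdn d m = true -> (Z.of_nat d | Z.of_nat m).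
Proof.
  intro H. destruct (ssrbool.elimT div.dvdnP H) as [k Hk].
  exists (Z.of_nat k). rewrite Hk. change (ssrnat.muln k d) with (Nat.mul k d).
  now rewrite Nat2Z.inj_mul.
Qed.

Lemma euler_Z (p N : Z) : prime p -> ~ (p | N) -> N <> 0 ->
  exists h, 1 <= h /\ (N | p ^ h - 1).
Proof.
  intros Hp HpN HN.
  assert (Hp1 : 1 < p) by (destruct Hp; lia).
  set (a := Z.to_nat p). set (n := Z.to_nat (Z.abs N)).
  assert (Ha : Z.of_nat a = p) by (unfold a; lia).
  assert (Hn : Z.of_nat n = Z.abs N) by (unfold n; lia).
  assert (Hcop : div.coprime a n = true).
  { unfold div.coprime.
    set (g := div.gcdn a n).
    assert (G1 : (Z.of_nat g | p)) by (rewrite <- Ha; apply dvdn_Z, div.dvdn_gcdl).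
    assert (G2 : (Z.of_nat g | N)).
    { apply Z.divide_abs_r. rewrite <- Hn. apply dvdn_Z, div.dvdn_gcdr. }
    destruct (prime_divisors p Hp _ G1) as [E|[E|[E|E]]]; try lia.
    - assert (g = 1%nat) as -> by lia. reflexivity.
    - exfalso. apply HpN. rewrite <- E. exact G2. }
  assert (Hn0 : (0 < n)%nat) by lia.
  assert (Hn0' : ssrnat.leq 1 n = true) by (apply (ssrbool.introT ssrnat.ltP); exact Hn0).
  set (t := prime.totient n).
  assert (Ht : ssrnat.leq 1 t = true) by (unfold t; rewrite prime.totient_gt0; exact Hn0').
  assert (Ht' : (0 < t)%nat) by (apply (ssrbool.elimT ssrnat.ltP); exact Ht).
  pose proof (@cyclic.Euler_exp_totient a n Hcop) as E.
  assert (Hge : ssrnat.leq 1 (ssrnat.expn a t) = true).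
  { rewrite ssrnat.expn_gt0. apply (ssrbool.introT ssrbool.orP). left. apply (ssrbool.introT ssrnat.ltP). lia. }
  assert (D : div.dvdn n (ssrnat.subn (ssrnat.expn a t) 1) = true).
  { rewrite <- div.eqn_mod_dvd by exact Hge. apply (ssrbool.introT eqtype.eqP). exact E. }
  apply dvdn_Z in D.
  exists (Z.of_nat t). split; [lia|].
  apply Z.divide_abs_l. rewrite <- Hn.
  change (ssrnat.subn (ssrnat.expn a t) 1) with (Nat.sub (ssrnat.expn a t) 1) in D.
  assert (Hge' : (1 <= ssrnat.expn a t)%nat) by (apply (ssrbool.elimT ssrnat.leP); exact Hge).
  rewrite Nat2Z.inj_sub, expn_Z, Ha in D by exact Hge'. exact D.
Qed.

Lemma prime_gt1 p : prime p -> 1 < p.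
Proof. intro H; destruct H; lia. Qed.

Lemma pow_ge1 p k : 1 < p -> 0 <= k -> 1 <= p ^ k.
Proof. intros; assert (0 < p ^ k) by (apply Z.pow_pos_nonneg; lia); lia. Qed.

Lemma pow_ge2 p k : 1 < p -> 1 <= k -> 2 <= p ^ k.
Proof.
  intros Hp Hk. replace k with (Z.succ (k-1)) by lia.
  rewrite Z.pow_succ_r by lia. pose proof (pow_ge1 p (k-1) Hp ltac:(lia)). nia.
Qed.

Lemma p_div_pow p k : 1 <= k -> (p | p ^ k).
Proof.
  intro Hk. replace k with (Z.succ (k-1)) by lia.
  rewrite Z.pow_succ_r by lia. apply Z.divide_factor_l.
Qed.

Lemma div_le a b : (a | b) -> b <> 0 -> Z.abs a <= Z.abs b.
Proof.
  intros [k ->] H. rewrite Z.abs_mul. assert (k <> 0) by (intro; subst; lia). nia.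
Qed.

Lemma cancel_pow p A X k : prime p -> ~ (p | A) -> 0 <= k -> (A | X * p ^ k) -> (A | X).
Proof.
  intros Hp HA Hk H. apply Gauss with (p ^ k).
  - rewrite Z.mul_comm. exact H.
  - apply rel_prime_Zpower_r; [exact Hk|]. apply rel_prime_sym, prime_rel_prime; assumption.
Qed.

Lemma not_div_unit p t : prime p -> (t = 1 \/ t = -1) -> ~ (p | t).
Proof.
  intros Hp Ht H. pose proof (prime_gt1 p Hp).
  assert (p | 1) by (destruct Ht; subst; [exact H| apply Z.divide_opp_r in H; exact H]).
  apply Z.divide_1_r in H1. lia.
Qed.

Lemma pdiv1 p a : prime p -> pdiv p 1 a -> Tset a ->
  exists r, 1 <= r /\ exists t, (t = 1 \/ t = -1) /\ a = t * p ^ r.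
Proof.
  intros Hp [s Hs] [T1 [T2 T3]].
  pose proof (prime_gt1 p Hp) as Hp1.
  destruct Hs as [H|[H|[H|H]]].
  - destruct s. { simpl in H. lia. }
    exists (Z.of_nat (S s)). split; [lia|]. exists 1. split; [auto|]. lia.
  - destruct s. { simpl in H. lia. }
    exists (Z.of_nat (S s)). split; [lia|]. exists (-1). split; [auto|]. lia.
  - assert (a | 1) by (exists (p ^ Z.of_nat s); lia).
    apply Z.divide_1_r in H0. lia.
  - assert (a | 1) by (exists (- p ^ Z.of_nat s); lia).
    apply Z.divide_1_r in H0. lia.
Qed.

Lemma pdivz p z w : prime p -> ~ (p | z) -> pdiv p z w ->
  exists q, 0 <= q /\ exists s, (s = 1 \/ s = -1) /\ w = s * (z * p ^ q).
Proof.
  intros Hp Hz [k Hk]. pose proof (prime_gt1 p Hp) as Hp1.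
  destruct Hk as [H|[H|[H|H]]].
  - exists (Z.of_nat k). split; [lia|]. exists 1. split; [auto|lia].
  - exists (Z.of_nat k). split; [lia|]. exists (-1). split; [auto|lia].
  - destruct k.
    + exists 0. split; [lia|]. exists 1. split; [auto|]. simpl in H. lia.
    + exfalso. apply Hz. rewrite H. apply Z.divide_mul_r. apply p_div_pow. lia.
  - destruct k.
    + exists 0. split; [lia|]. exists (-1). split; [auto|]. simpl in H. lia.
    + exfalso. apply Hz. rewrite H. apply Z.divide_opp_r. apply Z.divide_mul_r. apply p_div_pow. lia.
Qed.

Lemma gadget p z f w : prime p -> ~ (p | z) -> 4 <= Z.abs z ->
  (exists r, 1 <= r /\ exists t, (t = 1 \/ t = -1) /\ f = t * p ^ r) ->
  pdiv p z w -> (f | w) -> pdiv p (z-1) (w - f) -> w = z * f.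
Proof.
  intros Hp Hz Hz4 [r [Hr [t [Ht Hf]]]] Hzw Hfw H2.
  pose proof (prime_gt1 p Hp) as Hp1.
  destruct (pdivz p z w Hp Hz Hzw) as [q [Hq [s [Hs Hw]]]].
  assert (Hrq : r <= q).
  { destruct (Z.le_gt_cases r q) as [|Hlt]; [assumption|exfalso].
    assert (Hpr : (p ^ r | z * p ^ q)).
    { apply Z.divide_trans with f.
      - exists t. rewrite Hf. destruct Ht; subst; ring.
      - apply Z.divide_trans with w; [exact Hfw|]. exists s. rewrite Hw. destruct Hs; subst; ring. }
    replace r with ((r - q) + q) in Hpr by lia.
    rewrite Z.pow_add_r in Hpr by lia.
    apply Z.mul_divide_cancel_r in Hpr; [|apply Z.pow_nonzero; lia].
    apply Hz. apply Z.divide_trans with (p ^ (r - q)); [apply p_div_pow; lia|exact Hpr]. }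
  set (d := q - r).
  assert (Hpq : p ^ q = p ^ r * p ^ d) by (unfold d; rewrite <- Z.pow_add_r by lia; f_equal; lia).
  set (D := p ^ d) in *.
  set (R := p ^ r) in *.
  assert (HR : 2 <= R) by (apply pow_ge2; lia).
  rewrite Hpq in Hw.
  destruct H2 as [k Hk].
  set (P := p ^ Z.of_nat k) in *.
  assert (HP : 1 <= P) by (apply pow_ge1; lia).
  assert (Hwf : w - f = R * (s * z * D - t)) by (rewrite Hw, Hf; ring).
  rewrite Hwf in Hk.
  assert (Hz1 : z - 1 <> 0) by lia.
  destruct (Z.eq_dec d 0) as [Hd0|Hd0].
  - assert (HD : D = 1) by (unfold D; rewrite Hd0; reflexivity).
    rewrite HD in Hk, Hw.
    destruct (Z.eq_dec s t) as [Hst|Hst].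
    + rewrite Hw, Hf, Hst. ring.
    + exfalso.
      assert (Hst' : s = - t) by (destruct Hs, Ht; subst; lia).
      assert (E : R * (s * z * 1 - t) = - t * (R * (z + 1))) by (rewrite Hst'; ring).
      rewrite E in Hk.
      destruct Hk as [H|[H|[H|H]]].
      *
        destruct (Z.lt_total r (Z.of_nat k)) as [Hlt|[Heq|Hgt]].
        -- assert (HP' : P = R * p ^ (Z.of_nat k - r)) by
             (unfold P, R; rewrite <- Z.pow_add_r by lia; f_equal; lia).
           assert (2 <= p ^ (Z.of_nat k - r)) by (apply pow_ge2; lia).
           rewrite HP' in H.
           assert (- t * (z + 1) = (z - 1) * p ^ (Z.of_nat k - r)) by nia.
           destruct Ht; subst; nia.
        -- assert (P = R) by (unfold P, R; rewrite Heq; reflexivity).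
           assert (- t * (z + 1) = (z - 1)) by nia.
           destruct Ht; subst; nia.
        -- assert (HR' : R = P * p ^ (r - Z.of_nat k)) by
             (unfold P, R; rewrite <- Z.pow_add_r by lia; f_equal; lia).
           assert (2 <= p ^ (r - Z.of_nat k)) by (apply pow_ge2; lia).
           rewrite HR' in H.
           assert (- t * (p ^ (r - Z.of_nat k) * (z + 1)) = (z - 1)) by nia.
           destruct Ht; subst; nia.
      * destruct (Z.lt_total r (Z.of_nat k)) as [Hlt|[Heq|Hgt]].
        -- assert (HP' : P = R * p ^ (Z.of_nat k - r)) by
             (unfold P, R; rewrite <- Z.pow_add_r by lia; f_equal; lia).
           assert (2 <= p ^ (Z.of_nat k - r)) by (apply pow_ge2; lia).
           rewrite HP' in H.
           assert (- t * (z + 1) = - ((z - 1) * p ^ (Z.of_nat k - r))) by nia.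
           destruct Ht; subst; nia.
        -- assert (P = R) by (unfold P, R; rewrite Heq; reflexivity).
           assert (- t * (z + 1) = - (z - 1)) by nia.
           destruct Ht; subst; nia.
        -- assert (HR' : R = P * p ^ (r - Z.of_nat k)) by
             (unfold P, R; rewrite <- Z.pow_add_r by lia; f_equal; lia).
           assert (2 <= p ^ (r - Z.of_nat k)) by (apply pow_ge2; lia).
           rewrite HR' in H.
           assert (- t * (p ^ (r - Z.of_nat k) * (z + 1)) = - (z - 1)) by nia.
           destruct Ht; subst; nia.
      * destruct Ht; subst; nia.
      * destruct Ht; subst; nia.
  - exfalso.
    assert (HpD : (p | D)) by (apply p_div_pow; unfold d in *; lia).
    assert (HD2 : 2 <= D) by (apply pow_ge2; unfold d in *; lia).
    set (A := s * z * D - t) in *.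
    assert (HA : ~ (p | A)).
    { intro HA. apply (not_div_unit p t Hp Ht).
      replace t with (s * z * D - A) by (unfold A; ring).
      apply Z.divide_sub_r; [|exact HA]. apply Z.divide_mul_r. exact HpD. }
    assert (HAz : (A | z - 1)).
    { destruct Hk as [H|[H|[H|H]]].
      - apply (cancel_pow p A (z-1) (Z.of_nat k) Hp HA ltac:(lia)).
        exists R. unfold P in H. rewrite <- H. ring.
      - apply (cancel_pow p A (z-1) (Z.of_nat k) Hp HA ltac:(lia)).
        exists (- R). unfold P in H. rewrite <- (Z.opp_involutive ((z-1) * _)). rewrite <- H. ring.
      - rewrite H. exists (R * P). ring.
      - rewrite H. exists (- (R * P)). ring. }
    apply div_le in HAz; [|exact Hz1].
    unfold A in HAz.
    destruct Hs, Ht; subst; nia.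
Qed.

Lemma sq_le a b : 0 <= a <= b -> a * a <= b * b.
Proof. intros; nia. Qed.

Lemma two_le_sq u : 2 <= u -> 2 * u <= u * u.
Proof. intros; nia. Qed.

Lemma sq_from p x y a e z w : prime p ->
 pdiv p 1 a -> Tset a -> (x | a - 1) -> (y | a - 1) ->
 pdiv p 1 e -> Tset e -> (8*a - 1 | e - 1) -> (8*a+1 | e - 1) ->
 z = 2*e - x -> pdiv p z w -> (e | w) -> pdiv p (z - 1) (w - e) ->
 (e - x | w - y) -> y = x^2 /\ ~ (p | x).
Proof.
  intros Hp Ha Ta Hxa Hya He Te H1 H2 Hz Hzw Hew Hg Hfin.
  pose proof (prime_gt1 p Hp) as Hp1.
  destruct (pdiv1 p a Hp Ha Ta) as [r [Hr [t [Ht Hat]]]].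
  assert (Hpa : (p | a)) by (rewrite Hat; apply Z.divide_mul_r, p_div_pow; lia).
  assert (Hpr : 2 <= p ^ r) by (apply pow_ge2; lia).
  assert (Habs : 2 <= Z.abs a) by (rewrite Hat; destruct Ht; subst; lia).
  assert (Hpx : ~ (p | x)).
  { intro H. apply (not_div_unit p 1 Hp (or_introl eq_refl)).
    replace 1 with (a - (a - 1)) by ring. apply Z.divide_sub_r; [exact Hpa|].
    apply Z.divide_trans with x; assumption. }
  split; [|exact Hpx].
  assert (Hx : Z.abs x <= Z.abs (a - 1)) by (apply div_le; [assumption|lia]).
  assert (Hy : Z.abs y <= Z.abs (a - 1)) by (apply div_le; [assumption|lia]).
  assert (Hprod : ((8*a-1)*(8*a+1) | e - 1)).
  { destruct H1 as [k Hk]. rewrite Hk in H2 |- *.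
    assert (Hrp : rel_prime (8*a+1) (8*a-1)).
    { apply bezout_rel_prime. apply Bezout_intro with (1 - 4*a) (4*a). ring. }
    assert (Hk2 : (8*a+1 | k)).
    { apply Gauss with (8*a-1); [|exact Hrp]. rewrite (Z.mul_comm (8*a-1) k). exact H2. }
    destruct Hk2 as [j ->]. exists j. ring. }
  destruct Te as [Te1 [Te2 Te3]].
  apply div_le in Hprod; [|lia].
  assert (Hprodv : (8*a-1)*(8*a+1) = 64*(a*a) - 1) by ring.
  rewrite Hprodv in Hprod.
  assert (Ha2 : 4 <= a * a) by nia.
  assert (He64 : 64*(a*a) - 2 <= Z.abs e) by lia.
  destruct (pdiv1 p e Hp He (conj Te1 (conj Te2 Te3))) as [r' [Hr' [t' [Ht' Het]]]].
  assert (Hpe : (p | e)) by (rewrite Het; apply Z.divide_mul_r, p_div_pow; lia).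
  assert (Hpz : ~ (p | z)).
  { intro H. apply Hpx. replace x with (2 * e - z) by lia.
    apply Z.divide_sub_r; [apply Z.divide_mul_r; exact Hpe | exact H]. }
  assert (Ha2'' : a * a = Z.abs a * Z.abs a) by (rewrite <- Z.abs_square; ring).
  assert (Haa : Z.abs a <= a * a) by nia.
  assert (Hz4 : 4 <= Z.abs z) by lia.
  assert (Hw : w = z * e).
  { apply (gadget p z e w Hp Hpz Hz4); try assumption.
    exists r'. split; [exact Hr'|]. exists t'. split; assumption. }
  assert (Hd : (e - x | x^2 - y)).
  { replace (x^2 - y) with ((w - y) - (e - x) * (2*e + x)) by (rewrite Hw, Hz; ring).
    apply Z.divide_sub_r; [exact Hfin| apply Z.divide_factor_l]. }
  destruct (Z.eq_dec (x^2 - y) 0) as [E|E]; [lia|exfalso].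
  apply div_le in Hd; [|exact E].
  rewrite Z.pow_2_r in Hd.
  set (u := Z.abs a) in *.
  assert (Hxa1 : Z.abs x <= u + 1) by lia.
  assert (Hya1 : Z.abs y <= u + 1) by lia.
  assert (Hxx : x * x <= u * u + 2 * u + 1).
  { rewrite <- (Z.abs_square x).
    pose proof (sq_le (Z.abs x) (u + 1) ltac:(lia)). lia. }
  assert (Huu : 2 * u <= u * u) by (apply two_le_sq; lia).
  rewrite Ha2'' in He64.
  assert (0 <= x * x) by apply Z.square_nonneg.
  clear -Hd Hxx Huu He64 Hxa1 Hya1 Habs.
  set (XX := x * x) in *. set (UU := u * u) in *.
  lia.
Qed.

Lemma le_self_mul a b : 1 <= b -> 0 <= a -> a <= a * b.
Proof. intros; nia. Qed.

Lemma part1 p m n : prime p ->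
     ((n = m ^ 2 /\ ~ Z.divide p m /\ ~ Z.divide p n) <->
      (~ Z.divide p m /\ ~ Z.divide p n /\
       exists a : Z, (exists h : Z, 1 <= h /\ (a = p ^ h \/ a = - p ^ h)) /\
         Z.divide m (a ^ 2 - 1) /\ Z.divide n (a ^ 2 - 1) /\
         Z.divide (a ^ 8 - m) (a ^ 16 - n))).
Proof.
  intro Hp. pose proof (prime_gt1 p Hp) as Hp1. split.
  - intros [Hn [Hm Hpn]]. split; [exact Hm|]. split; [exact Hpn|].
    assert (Hm0 : m ^ 2 <> 0).
    { intro E. apply Hm. rewrite Z.pow_2_r in E. apply Z.eq_mul_0 in E. destruct E; subst; apply Z.divide_0_r. }
    assert (Hpm2 : ~ (p | m ^ 2)).
    { intro H. rewrite Z.pow_2_r in H. apply prime_mult in H; [|exact Hp]. tauto. }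
    destruct (euler_Z p (m^2) Hp Hpm2 Hm0) as [h [Hh Hd]].
    exists (p ^ h). split; [exists h; auto|].
    assert (Hsq : (m ^ 2 | (p ^ h) ^ 2 - 1)).
    { apply Z.divide_trans with (p ^ h - 1); [exact Hd|]. exists (p ^ h + 1). ring. }
    split; [|split].
    + apply Z.divide_trans with (m ^ 2); [exists m; ring|exact Hsq].
    + rewrite Hn; exact Hsq.
    + rewrite Hn. exists ((p ^ h) ^ 8 + m). ring.
  - intros [Hm [Hpn [a [[h [Hh Ha]] [Hma [Hna Hd]]]]]].
    split; [|split; assumption].
    assert (HB : a ^ 2 = p ^ h * p ^ h) by (destruct Ha; subst; ring).
    assert (Hph : 2 <= p ^ h) by (apply pow_ge2; lia).
    set (B := a ^ 2) in *.
    assert (HB4 : 4 <= B) by (pose proof (sq_le 2 (p ^ h) ltac:(lia)); lia).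
    assert (Hm1 : Z.abs m <= B - 1) by (pose proof (div_le _ _ Hma ltac:(lia)); lia).
    assert (Hn1 : Z.abs n <= B - 1) by (pose proof (div_le _ _ Hna ltac:(lia)); lia).
    assert (Hd2 : (a ^ 8 - m | m ^ 2 - n)).
    { replace (m ^ 2 - n) with ((a ^ 16 - n) - (a ^ 8 - m) * (a ^ 8 + m)) by ring.
      apply Z.divide_sub_r; [exact Hd|apply Z.divide_factor_l]. }
    destruct (Z.eq_dec (m ^ 2 - n) 0) as [E|E]; [lia|exfalso].
    apply div_le in Hd2; [|exact E].
    assert (H8 : a ^ 8 = B * B * (B * B)) by (unfold B; ring).
    rewrite H8, Z.pow_2_r in Hd2.
    assert (Hmm : m * m <= B * B - 2 * B + 1) by (rewrite <- (Z.abs_square m); pose proof (sq_le (Z.abs m) (B - 1) ltac:(lia)); lia).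
    assert (H4 : B * B <= B * B * (B * B)) by (apply le_self_mul; pose proof (sq_le 1 B ltac:(lia)); lia).
    assert (HBB : 4 * B <= B * B) by (apply Z.mul_le_mono_nonneg_r; lia).
    assert (0 <= m * m) by apply Z.square_nonneg.
    clear -Hd2 Hmm H4 HBB Hm1 Hn1 HB4.
    set (MM := m * m) in *. set (B4 := B * B * (B * B)) in *. set (B2 := B * B) in *.
    lia.
Qed.

Definition V (i : nat) : term := tVar i.
Definition eight (t : term) : term :=
  tPlus t (tPlus t (tPlus t (tPlus t (tPlus t (tPlus t (tPlus t t)))))).

Definition body : pef :=
  (fAnd (fR tOne (V 2))
  (fAnd (fT (V 2))
  (fAnd (fEq (tPlus (V 3) tOne) (V 2))
  (fAnd (fDiv (V 0) (V 3))
  (fAnd (fDiv (V 1) (V 3))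
  (fAnd (fR tOne (V 4))
  (fAnd (fT (V 4))
  (fAnd (fEq (tPlus (V 5) tOne) (V 4))
  (fAnd (fEq (tPlus (V 6) tOne) (eight (V 2)))
  (fAnd (fEq (V 7) (tPlus (eight (V 2)) tOne))
  (fAnd (fDiv (V 6) (V 5))
  (fAnd (fDiv (V 7) (V 5))
  (fAnd (fEq (tPlus (V 8) (V 0)) (tPlus (V 4) (V 4)))
  (fAnd (fEq (tPlus (V 9) tOne) (V 8))
  (fAnd (fR (V 8) (V 10))
  (fAnd (fDiv (V 4) (V 10))
  (fAnd (fEq (tPlus (V 11) (V 4)) (V 10))
  (fAnd (fR (V 9) (V 11))
  (fAnd (fEq (tPlus (V 12) (V 0)) (V 4))
  (fAnd (fEq (tPlus (V 13) (V 1)) (V 10))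
  (fDiv (V 12) (V 13)))))))))))))))))))))).

Definition phi : pef :=
  fEx 2 (fEx 3 (fEx 4 (fEx 5 (fEx 6 (fEx 7 (fEx 8 (fEx 9 (fEx 10 (fEx 11 (fEx 12 (fEx 13 body))))))))))).

Lemma phi_correct p env : prime p -> (sat p env phi <-> (env 1%nat = env 0%nat ^ 2 /\ ~ (p | env 0%nat))).
Proof.
  intro Hp. pose proof (prime_gt1 p Hp) as Hp1.
  set (x := env 0%nat). set (y := env 1%nat).
  unfold phi, body, eight, V. simpl. unfold upd. simpl. fold x y.
  split.
  - intros [a [a1 [e [e1 [u1 [u2 [z [z1 [w [w1 [m [n H]]]]]]]]]]]].
    destruct H as [Ha [Ta [Ea1 [Hxa [Hya [He [Te [Ee1 [Eu1 [Eu2 [Hu1 [Hu2 [Ez [Ez1 [Hzw [Hew [Ew1 [Hg [Em [En Hmn]]]]]]]]]]]]]]]]]]]].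
    replace a1 with (a - 1) in * by lia.
    replace e1 with (e - 1) in * by lia.
    replace u1 with (8 * a - 1) in * by lia.
    replace u2 with (8 * a + 1) in * by lia.
    replace z1 with (z - 1) in * by lia.
    replace w1 with (w - e) in * by lia.
    replace m with (e - x) in * by lia.
    replace n with (w - y) in * by lia.
    apply (sq_from p x y a e z w); auto; lia.
  - intros [Hy Hx].
    assert (Hx0 : x ^ 2 <> 0).
    { intro E. apply Hx. rewrite Z.pow_2_r in E. apply Z.eq_mul_0 in E. destruct E as [E|E]; rewrite E; apply Z.divide_0_r. }
    assert (Hpx2 : ~ (p | x ^ 2)).
    { intro H. rewrite Z.pow_2_r in H. apply prime_mult in H; [|exact Hp]. tauto. }
    destruct (euler_Z p (x^2) Hp Hpx2 Hx0) as [h [Hh Hd]].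
    set (a := p ^ h).
    assert (Ha2 : 2 <= a) by (apply pow_ge2; lia).
    assert (Hpa : (p | a)) by (apply p_div_pow; lia).
    assert (Hpu : ~ (p | (8*a-1)*(8*a+1))).
    { intro H. apply (not_div_unit p 1 Hp (or_introl eq_refl)).
      replace 1 with (64 * a * a - (8*a-1)*(8*a+1)) by ring.
      apply Z.divide_sub_r; [|exact H]. apply Z.divide_mul_r. exact Hpa. }
    assert (Hu0 : (8*a-1)*(8*a+1) <> 0) by nia.
    destruct (euler_Z p _ Hp Hpu Hu0) as [s [Hs Hde]].
    set (e := p ^ s).
    assert (He2 : 2 <= e) by (apply pow_ge2; lia).
    set (z := 2 * e - x).
    exists a, (a - 1), e, (e - 1), (8*a-1), (8*a+1), z, (z - 1), (z * e), (z * e - e), (e - x), (z * e - y).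
    assert (Hpd1 : pdiv p 1 a).
    { unfold pdiv. exists (Z.to_nat h). left. rewrite Z2Nat.id by lia. unfold a. ring. }
    assert (Hpd2 : pdiv p 1 e).
    { unfold pdiv. exists (Z.to_nat s). left. rewrite Z2Nat.id by lia. unfold e. ring. }
    repeat split; try assumption; try lia.
    + apply Z.divide_trans with (x ^ 2); [exists x; ring|exact Hd].
    + rewrite Hy. exact Hd.
    + apply Z.divide_trans with ((8*a-1)*(8*a+1)); [apply Z.divide_factor_l|exact Hde].
    + apply Z.divide_trans with ((8*a-1)*(8*a+1)); [apply Z.divide_factor_r|exact Hde].
    + unfold pdiv. exists (Z.to_nat s). left. rewrite Z2Nat.id by lia. unfold e. ring.
    + apply Z.divide_factor_r.
    + unfold pdiv. exists (Z.to_nat s). left. rewrite Z2Nat.id by lia. unfold e. ring.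
    + exists (2 * e + x). rewrite Hy. unfold z. change (Z.pow_pos x 2) with (x ^ 2). ring.
Qed.

Theorem lemma4p11 :
  (forall p m n : Z, prime p ->
     ((n = m ^ 2 /\ ~ Z.divide p m /\ ~ Z.divide p n) <->
      (~ Z.divide p m /\ ~ Z.divide p n /\
       exists a : Z, (exists h : Z, 1 <= h /\ (a = p ^ h \/ a = - p ^ h)) /\
         Z.divide m (a ^ 2 - 1) /\ Z.divide n (a ^ 2 - 1) /\
         Z.divide (a ^ 8 - m) (a ^ 16 - n))))
  /\
  unif_pe_definable2 (fun p x y => y = x ^ 2 /\ ~ Z.divide p x).
Proof.
  split.
  - intros p m n Hp. exact (part1 p m n Hp).
  - exists phi. intros p Hp env. exact (phi_correct p env Hp).
Qed.
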